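(* Let $p\in[0,1]$, $\delta\in[0,1]$ and fix an integer $n_{\mathrm u}\ge1$. Then $\epsilon_s\to\epsilon_\infty$ almost surely as $s\to\infty$ for some random variable $\epsilon_\infty\in\{0,1\}$, and $$\Pr(\epsilon_\infty=0)=1-p-\Delta R(\delta,p,n_{\mathrm u}),\qquad \Delta R(\delta,p,n_{\mathrm u})=\big(1-(1-\delta)^{n_{\mathrm u}}\big)(1-p).$$
   Context: Define $T^{+}_{\delta}(\epsilon)=\epsilon^2+(1-\epsilon^2)\delta$, $T^{-}_{\delta}(\epsilon)=2\epsilon-\epsilon^2+(1-2\epsilon+\epsilon^2)\delta$, and the fault-free maps $T^{+}(\epsilon)=\epsilon^2$, $T^{-}(\epsilon)=2\epsilon-\epsilon^2$. The partially protected process $(\epsilon_s)_{s\ge0}$ is defined by $\epsilon_0=p$ and, for $s\ge1$, using independent fair coin flips: if $1\le s\le n_{\mathrm u}$, $\epsilon_s=T^{+}_{\delta}(\epsilon_{s-1})$ or $T^{-}_{\delta}(\epsilon_{s-1})$ each with probability $1/2$; if $s>n_{\mathrm u}$, $\epsilon_s=T^{+}(\epsilon_{s-1})$ or $T^{-}(\epsilon_{s-1})$ each with probability $1/2$. (This models an SC decoder in which only the first $n_{\mathrm u}$ levels are faulty with internal erasure probability $\delta$ and all remaining levels are fault-free.) *)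

(* Defs.v *)
From Stdlib Require Import Reals Lra Lia List.
Open Scope R_scope.

(* Faulty and fault-free erasure maps. *)
Definition Tplus_d (d e : R) : R := e ^ 2 + (1 - e ^ 2) * d.
Definition Tminus_d (d e : R) : R := 2 * e - e ^ 2 + (1 - 2 * e + e ^ 2) * d.
Definition Tplus (e : R) : R := e ^ 2.
Definition Tminus (e : R) : R := 2 * e - e ^ 2.

(* Sample space: infinite sequences of fair coin flips.
   Flip number s (0-based) is used to produce eps_(s+1). *)
Definition Omega := nat -> bool.

Fixpoint eps_proc (d p : R) (nu : nat) (w : Omega) (s : nat) : R :=
  match s with
  | O => p
  | S s' =>
      let e := eps_proc d p nu w s' in
      if Nat.leb (S s') nu
      then (if w s' then Tplus_d d e else Tminus_d d e)
      else (if w s' then Tplus e else Tminus e)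
  end.

(* Fair-coin (uniform Bernoulli(1/2) product) measure, via its outer measure
   generated by cylinder sets. *)
Definition cylinder (l : list bool) (w : Omega) : Prop :=
  forall i, (i < length l)%nat -> w i = nth i l false.

Definition cyl_mass (l : list bool) : R := (/ 2) ^ length l.

Definition outer_le (A : Omega -> Prop) (r : R) : Prop :=
  exists c : nat -> list bool,
    (forall w, A w -> exists k, cylinder (c k) w) /\
    (forall N, sum_f_R0 (fun k => cyl_mass (c k)) N <= r).

Definition outer_measure_is (A : Omega -> Prop) (v : R) : Prop :=
  (forall r, v < r -> outer_le A r) /\ (forall r, outer_le A r -> v <= r).

Definition null_set (A : Omega -> Prop) : Prop :=
  forall r, 0 < r -> outer_le A r.

Definition DeltaR (d p : R) (nu : nat) : R := (1 - (1 - d) ^ nu) * (1 - p).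

(* Main.v *)
Require Import Defs.
From Stdlib Require Import Reals Lra Lia List Classical ClassicalEpsilon.
Open Scope R_scope.
Import ListNotations.

Fixpoint msum (L : list (list bool)) : R :=
  match L with [] => 0 | l :: L' => cyl_mass l + msum L' end.

Lemma cyl_mass_pos l : 0 < cyl_mass l.
Proof. unfold cyl_mass. apply pow_lt. lra. Qed.

Lemma msum_nonneg L : 0 <= msum L.
Proof. induction L; simpl; [lra|]. pose proof (cyl_mass_pos a). lra. Qed.

Lemma msum_app L1 L2 : msum (L1 ++ L2) = msum L1 + msum L2.
Proof. induction L1; simpl; lra. Qed.

Lemma msum_In l L : In l L -> cyl_mass l <= msum L.
Proof.
  induction L as [|a L IH]; simpl; [tauto|]. intros [H|H].
  - subst. pose proof (msum_nonneg L). lra.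
  - pose proof (IH H). pose proof (cyl_mass_pos a). lra.
Qed.

Fixpoint tails (b : bool) (L : list (list bool)) : list (list bool) :=
  match L with
  | [] => []
  | l :: L' => match l with
               | [] => tails b L'
               | b' :: l' => if Bool.eqb b b' then l' :: tails b L' else tails b L'
               end
  end.

Lemma cyl_mass_cons b l : cyl_mass (b :: l) = cyl_mass l / 2.
Proof. unfold cyl_mass; simpl. field. Qed.

Lemma msum_tails L : (msum (tails true L) + msum (tails false L)) / 2 <= msum L.
Proof.
  induction L as [|l L IH]; simpl. lra.
  destruct l as [|b l'].
  - pose proof (cyl_mass_pos []). lra.
  - rewrite cyl_mass_cons. destruct b; simpl; lra.
Qed.

Lemma In_tails b l L : In (b :: l) L -> In l (tails b L).
Proof.
  induction L as [|a L IH]; simpl; [tauto|]. intros [H|H].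
  - subst. rewrite Bool.eqb_reflx. left; auto.
  - destruct a as [|b' l']; auto. destruct (Bool.eqb b b'); simpl; auto.
Qed.

Lemma In_tails_rev b l L : In l (tails b L) -> In (b :: l) L.
Proof.
  induction L as [|a L IH]; simpl; [tauto|]. intros H.
  destruct a as [|b' l']; auto.
  destruct (Bool.eqb b b') eqn:E; simpl in H; auto.
  apply Bool.eqb_prop in E. subst. destruct H as [H|H]; [subst; auto|auto].
Qed.

Definition wcons (b : bool) (w : Omega) : Omega :=
  fun i => match i with O => b | S i' => w i' end.

Lemma finite_cover_mass : forall M L, (forall l, In l L -> (length l <= M)%nat) ->
  (forall w, exists l, In l L /\ cylinder l w) -> 1 <= msum L.
Proof.
  induction M as [|M IH]; intros L HL Hc.
  - destruct (Hc (fun _ => false)) as [l [Hl _]].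
    pose proof (HL l Hl) as H. destruct l; [|simpl in H; lia].
    pose proof (msum_In _ _ Hl) as H0. unfold cyl_mass in H0; simpl in H0. lra.
  - destruct (classic (In [] L)) as [Hn|Hn].
    + pose proof (msum_In _ _ Hn) as H. unfold cyl_mass in H; simpl in H; lra.
    + assert (HT: forall b, 1 <= msum (tails b L)).
      { intro b. apply IH.
        - intros l Hl. apply In_tails_rev in Hl. apply HL in Hl. simpl in Hl. lia.
        - intro w'. destruct (Hc (wcons b w')) as [l [Hl Hcy]].
          destruct l as [|b' l']. contradiction.
          assert (b' = b).
          { pose proof (Hcy 0%nat) as H0. simpl in H0. symmetry. apply H0. lia. }
          subst b'. exists l'. split. apply In_tails; auto.
          intros i Hi. apply (Hcy (S i)). simpl. lia. }
      pose proof (msum_tails L). pose proof (HT true); pose proof (HT false). lra.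
Qed.

Lemma msum_map_seq (f : nat -> list bool) N :
  msum (map f (seq 0 (S N))) = sum_f_R0 (fun k => cyl_mass (f k)) N.
Proof.
  induction N.
  - simpl. ring.
  - rewrite seq_S, map_app, msum_app, IHN. simpl. ring.
Qed.

Lemma len_bound (L : list (list bool)) : exists M, forall l, In l L -> (length l <= M)%nat.
Proof.
  induction L as [|a L [M HM]]. exists 0%nat; simpl; tauto.
  exists (Nat.max (length a) M). intros l [H|H]. subst; lia. apply HM in H; lia.
Qed.

Definition agree (n : nat) (v w : Omega) := forall i, (i < n)%nat -> v i = w i.
Definition Inf (W : nat -> Omega) n v := forall M, exists N, (M <= N)%nat /\ agree n v (W N).
Definition upd (v : Omega) n (b : bool) : Omega := fun i => if Nat.ltb i n then v i else b.

Lemma agree_upd n v w b : agree n v w -> w n = b -> agree (S n) (upd v n b) w.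
Proof.
  intros H Hb i Hi. unfold upd. destruct (Nat.ltb i n) eqn:E.
  - apply Nat.ltb_lt in E. auto.
  - apply Nat.ltb_ge in E. assert (i = n) by lia. subst; auto.
Qed.

Lemma Inf_split W n v : Inf W n v -> Inf W (S n) (upd v n true) \/ Inf W (S n) (upd v n false).
Proof.
  intros H. destruct (classic (Inf W (S n) (upd v n true))) as [h|h]; [left; auto|right].
  intro M. unfold Inf in h. apply not_all_ex_not in h. destruct h as [M1 h].
  destruct (H (Nat.max M M1)) as [N [HN HA]].
  exists N. split. lia.
  destruct (W N n) eqn:E.
  - exfalso. apply h. exists N. split. lia. apply agree_upd; auto.
  - apply agree_upd; auto.
Qed.

Fixpoint Vseq (W : nat -> Omega) (n : nat) : Omega :=
  match n with
  | O => fun _ => false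
  | S n' => let v := Vseq W n' in
            if excluded_middle_informative (Inf W (S n') (upd v n' true))
            then upd v n' true else upd v n' false
  end.

Lemma Vseq_Inf W n : Inf W n (Vseq W n).
Proof.
  induction n.
  - intro M. exists M. split. lia. intros i Hi; lia.
  - simpl. destruct (excluded_middle_informative _) as [h|h]; auto.
    destruct (Inf_split _ _ _ IHn); tauto.
Qed.

Lemma Vseq_stable W n i : (i < n)%nat -> Vseq W (S n) i = Vseq W n i.
Proof.
  intros H. simpl. assert (Nat.ltb i n = true) by (apply Nat.ltb_lt; auto).
  destruct (excluded_middle_informative _); unfold upd; rewrite H0; auto.
Qed.

Lemma Vseq_stable2 W n m i : (i < n)%nat -> (n <= m)%nat -> Vseq W m i = Vseq W n i.
Proof.
  intros H1 H2. induction H2; auto. rewrite Vseq_stable by lia. auto.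
Qed.

Lemma two_cover_mass (A B : Omega -> Prop) r1 r2 :
  (forall w, A w \/ B w) -> outer_le A r1 -> outer_le B r2 -> 1 <= r1 + r2.
Proof.
  intros HAB [c [Hc Hcs]] [c' [Hc' Hcs']].
  apply Rnot_lt_le. intro Hlt.
  assert (HN : forall N, exists w, forall k, (k <= N)%nat -> ~ cylinder (c k) w /\ ~ cylinder (c' k) w).
  { intro N.
    set (LN := map c (seq 0 (S N)) ++ map c' (seq 0 (S N))).
    assert (Hm : msum LN < 1).
    { unfold LN. rewrite msum_app, !msum_map_seq. specialize (Hcs N). specialize (Hcs' N). lra. }
    destruct (classic (forall w, exists l, In l LN /\ cylinder l w)) as [Hall|Hn].
    - destruct (len_bound LN) as [M HM]. pose proof (finite_cover_mass M LN HM Hall). lra.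
    - apply not_all_ex_not in Hn. destruct Hn as [w Hw]. exists w. intros k Hk. split; intro Hcy; apply Hw.
      + exists (c k). split; auto. unfold LN. apply in_or_app; left. apply in_map. apply in_seq. simpl; lia.
      + exists (c' k). split; auto. unfold LN. apply in_or_app; right. apply in_map. apply in_seq. simpl; lia. }
  set (W := fun N => proj1_sig (constructive_indefinite_description _ (HN N))).
  assert (HW : forall N k, (k <= N)%nat -> ~ cylinder (c k) (W N) /\ ~ cylinder (c' k) (W N)).
  { intros N. unfold W. destruct (constructive_indefinite_description _ (HN N)). simpl. auto. }
  set (wl := fun i => Vseq W (S i) i).
  assert (Hag : forall n, agree n (Vseq W n) wl).
  { intros n i Hi. unfold wl. apply Vseq_stable2; lia. }
  assert (Key : forall l k, cylinder l wl -> (forall N, (k <= N)%nat -> ~ cylinder l (W N)) -> False).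
  { intros l k Hcy Hno. destruct (Vseq_Inf W (length l) k) as [N [HN1 HN2]].
    apply (Hno N HN1). intros i Hi. rewrite <- HN2 by auto. rewrite Hag by auto. apply Hcy; auto. }
  destruct (HAB wl) as [Ha|Hb].
  - destruct (Hc wl Ha) as [k Hk]. apply (Key (c k) k Hk). intros N HN0. apply (HW N k HN0).
  - destruct (Hc' wl Hb) as [k Hk]. apply (Key (c' k) k Hk). intros N HN0. apply (HW N k HN0).
Qed.

Fixpoint psum (f : nat -> R) (n : nat) : R :=
  match n with O => 0 | S n' => psum f n' + f n' end.

Lemma sum_psum f N : sum_f_R0 f N = psum f (S N).
Proof. induction N; cbn [sum_f_R0 psum]. ring. rewrite IHN. cbn [psum]. ring. Qed.

Lemma psum_shift f n : psum f (S n) = f 0%nat + psum (fun i => f (S i)) n.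
Proof. induction n. cbn. ring. cbn [psum] in *. rewrite IHn. ring. Qed.

Lemma psum_nth L : psum (fun i => cyl_mass (nth i L [])) (length L) = msum L.
Proof.
  induction L as [|a L IH]. reflexivity.
  simpl length. rewrite psum_shift. simpl. rewrite IH. reflexivity.
Qed.

Lemma psum_mono_n f m n : (forall i, 0 <= f i) -> (m <= n)%nat -> psum f m <= psum f n.
Proof.
  intros Hf H. induction H. lra. cbn [psum]. specialize (Hf m0). lra.
Qed.

Fixpoint pos (Ls : nat -> list (list bool)) (k : nat) : nat * nat :=
  match k with
  | O => (0%nat, 0%nat)
  | S k' => let (n, j) := pos Ls k' in
            if Nat.ltb (S j) (length (Ls n)) then (n, S j) else (S n, 0%nat)
  end.

Definition cseq Ls k := let (n, j) := pos Ls k in nth j (Ls n) [].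

Lemma pos_inv Ls : (forall n, Ls n <> []) -> forall k,
  (snd (pos Ls k) < length (Ls (fst (pos Ls k))))%nat.
Proof.
  intros Hne k. induction k.
  - simpl. destruct (Ls 0%nat) eqn:E. exfalso; apply (Hne 0%nat E). simpl; lia.
  - simpl. destruct (pos Ls k) as [n j] eqn:E. simpl in IHk.
    destruct (Nat.ltb (S j) (length (Ls n))) eqn:E2.
    + apply Nat.ltb_lt in E2. simpl; lia.
    + simpl. destruct (Ls (S n)) eqn:E3. exfalso; apply (Hne (S n) E3). simpl; lia.
Qed.

Lemma pos_reach Ls : (forall n, Ls n <> []) -> forall n j, (j < length (Ls n))%nat ->
  exists k, pos Ls k = (n, j).
Proof.
  intros Hne.
  assert (H0 : forall n, exists k, pos Ls k = (n, 0%nat)).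
  { induction n. exists 0%nat. reflexivity.
    destruct IHn as [k Hk].
    assert (Hj : forall j, (j < length (Ls n))%nat -> pos Ls (k + j) = (n, j)).
    { induction j; intros Hj. rewrite Nat.add_0_r; auto.
      rewrite Nat.add_succ_r. simpl. rewrite IHj by lia.
      assert (Nat.ltb (S j) (length (Ls n)) = true) by (apply Nat.ltb_lt; lia).
      rewrite H; auto. }
    pose proof (pos_inv Ls Hne k) as Hi. rewrite Hk in Hi. simpl in Hi.
    exists (S (k + (length (Ls n) - 1))). simpl. rewrite Hj by lia.
    assert (Nat.ltb (S (length (Ls n) - 1)) (length (Ls n)) = false) by (apply Nat.ltb_ge; lia).
    rewrite H; auto. }
  intros n j Hj. destruct (H0 n) as [k Hk].
  assert (Hj' : forall j, (j < length (Ls n))%nat -> pos Ls (k + j) = (n, j)).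
  { induction j0; intros Hj0. rewrite Nat.add_0_r; auto.
    rewrite Nat.add_succ_r. simpl. rewrite IHj0 by lia.
    assert (Nat.ltb (S j0) (length (Ls n)) = true) by (apply Nat.ltb_lt; lia).
    rewrite H; auto. }
  exists (k + j)%nat. auto.
Qed.

Lemma cseq_mass Ls : (forall n, Ls n <> []) -> forall K,
  psum (fun i => cyl_mass (cseq Ls i)) (S K) =
  psum (fun m => msum (Ls m)) (fst (pos Ls K)) +
  psum (fun i => cyl_mass (nth i (Ls (fst (pos Ls K))) [])) (S (snd (pos Ls K))).
Proof.
  intros Hne K. induction K.
  - simpl. unfold cseq. simpl. ring.
  - pose proof (pos_inv Ls Hne K) as Hi.
    change (psum (fun i => cyl_mass (cseq Ls i)) (S (S K))) with
      (psum (fun i => cyl_mass (cseq Ls i)) (S K) + cyl_mass (cseq Ls (S K))).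
    rewrite IHK. unfold cseq. simpl pos.
    destruct (pos Ls K) as [n j] eqn:E. simpl in Hi |- *.
    destruct (Nat.ltb (S j) (length (Ls n))) eqn:E2; simpl.
    + ring.
    + apply Nat.ltb_ge in E2. assert (S j = length (Ls n)) by lia.
      rewrite <- psum_nth, <- H. cbn [psum]. ring.
Qed.

Lemma union_cover (A : Omega -> Prop) (Ls : nat -> list (list bool)) (r : R) :
  (forall n, Ls n <> []) ->
  (forall w, A w -> exists n l, In l (Ls n) /\ cylinder l w) ->
  (forall N, sum_f_R0 (fun n => msum (Ls n)) N <= r) -> outer_le A r.
Proof.
  intros Hne Hc Hs. exists (cseq Ls). split.
  - intros w Hw. destruct (Hc w Hw) as [n [l [Hl Hcy]]].
    destruct (In_nth _ _ ([] : list bool) Hl) as [j [Hj Hnth]].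
    destruct (pos_reach Ls Hne n j Hj) as [k Hk]. exists k. unfold cseq. rewrite Hk, Hnth. auto.
  - intro N. rewrite sum_psum, cseq_mass by auto.
    pose proof (pos_inv Ls Hne N) as Hi.
    destruct (pos Ls N) as [n j]. simpl in *.
    assert (psum (fun i => cyl_mass (nth i (Ls n) [])) (S j) <= msum (Ls n)).
    { rewrite <- psum_nth. apply psum_mono_n. intro; apply Rlt_le, cyl_mass_pos. lia. }
    specialize (Hs n). rewrite sum_psum in Hs. cbn [psum] in Hs, H. lra.
Qed.

Definition step (d : R) (nu : nat) (k : nat) (b : bool) (e : R) : R :=
  if Nat.leb k nu then (if b then Tplus_d d e else Tminus_d d e)
  else (if b then Tplus e else Tminus e).

Fixpoint er (d p : R) (nu : nat) (r : list bool) : R :=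
  match r with [] => p | b :: r' => step d nu (S (length r')) b (er d p nu r') end.

Fixpoint rp (w : Omega) (n : nat) : list bool :=
  match n with O => [] | S n' => w n' :: rp w n' end.

Lemma rp_length w n : length (rp w n) = n.
Proof. induction n; simpl; auto. Qed.

Lemma eps_er d p nu w n : eps_proc d p nu w n = er d p nu (rp w n).
Proof.
  induction n; [reflexivity|]. simpl (rp w (S n)). cbn [er]. rewrite rp_length, <- IHn.
  reflexivity.
Qed.

Fixpoint E (n : nat) (F : list bool -> R) : R :=
  match n with O => F [] | S n' => E n' (fun r => (F (true :: r) + F (false :: r)) / 2) end.

Lemma E_ext n : forall F G, (forall r, length r = n -> F r = G r) -> E n F = E n G.
Proof.
  induction n; intros F G H; simpl. apply H; reflexivity.
  apply IHn. intros r Hr. rewrite (H (true::r)), (H (false::r)) by (simpl; lia). reflexivity.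
Qed.

Lemma E_mono n : forall F G, (forall r, length r = n -> F r <= G r) -> E n F <= E n G.
Proof.
  induction n; intros F G H; simpl. apply H; reflexivity.
  apply IHn. intros r Hr. pose proof (H (true::r)). pose proof (H (false::r)).
  simpl in *. specialize (H0 ltac:(lia)). specialize (H1 ltac:(lia)). lra.
Qed.

Lemma E_lin n : forall F G a b, E n (fun r => a * F r + b * G r) = a * E n F + b * E n G.
Proof.
  induction n; intros F G a b; simpl. reflexivity.
  rewrite <- IHn. apply E_ext. intros. field.
Qed.

Lemma E_const n : forall k, E n (fun _ => k) = k.
Proof.
  induction n; intros k; simpl. reflexivity.
  transitivity (E n (fun _ => k)); [apply E_ext; intros; field | apply IHn].
Qed.

Lemma E_scal n F a : E n (fun r => a * F r) = a * E n F.
Proof.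
  rewrite <- (Rplus_0_r (a * E n F)). rewrite <- (Rmult_0_l (E n F)).
  rewrite <- E_lin. apply E_ext; intros; ring.
Qed.

Lemma E_add n F G : E n (fun r => F r + G r) = E n F + E n G.
Proof.
  rewrite <- (Rmult_1_l (E n F)), <- (Rmult_1_l (E n G)).
  rewrite <- E_lin. apply E_ext; intros; ring.
Qed.

Definition indic (P : list bool -> Prop) (r : list bool) : R :=
  if excluded_middle_informative (P r) then 1 else 0.

Lemma markov n g th : 0 < th -> (forall r, 0 <= g r) ->
  th * E n (indic (fun r => th <= g r)) <= E n g.
Proof.
  intros Hth Hg. rewrite <- E_scal. apply E_mono. intros r _. unfold indic.
  destruct (excluded_middle_informative _); [lra| specialize (Hg r); lra].
Qed.

Lemma msum_map_app b L : msum (map (fun l => l ++ [b]) L) = msum L / 2.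
Proof.
  induction L as [|l L IH]; simpl. lra. rewrite IH.
  unfold cyl_mass. rewrite length_app, Nat.add_1_r. simpl. field.
Qed.

Lemma cyl_app l w b : cylinder l w -> w (length l) = b -> cylinder (l ++ [b]) w.
Proof.
  intros Hc Hb i Hi. rewrite length_app in Hi. simpl in Hi.
  destruct (Nat.lt_ge_cases i (length l)).
  - rewrite app_nth1 by auto. auto.
  - assert (i = length l) by lia. subst. rewrite app_nth2 by lia.
    rewrite Nat.sub_diag. simpl. auto.
Qed.

Lemma level_cover n : forall (P : list bool -> Prop), exists L,
  (forall l, In l L -> length l = n) /\
  (forall w, P (rp w n) -> exists l, In l L /\ cylinder l w) /\
  msum L = E n (indic P).
Proof.
  induction n; intros P.
  - destruct (classic (P [])) as [H|H].
    + exists [[]]. split; [|split].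
      * intros l [Hl|[]]; subst; reflexivity.
      * intros w _. exists []. split. left; auto. intros i Hi; simpl in Hi; lia.
      * simpl. unfold indic. destruct (excluded_middle_informative (P [])); [|tauto].
        unfold cyl_mass. simpl. ring.
    + exists []. split; [|split].
      * intros l [].
      * intros w Hw. simpl in Hw. tauto.
      * simpl. unfold indic. destruct (excluded_middle_informative (P [])); [tauto|]. reflexivity.
  - destruct (IHn (fun r => P (true :: r))) as [LT [HT1 [HT2 HT3]]].
    destruct (IHn (fun r => P (false :: r))) as [LF [HF1 [HF2 HF3]]].
    exists (map (fun l => l ++ [true]) LT ++ map (fun l => l ++ [false]) LF).
    split; [|split].
    + intros l Hl. apply in_app_or in Hl. destruct Hl as [Hl|Hl];
      apply in_map_iff in Hl; destruct Hl as [l0 [<- Hl0]]; rewrite length_app; simpl.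
      rewrite HT1 by auto; lia. rewrite HF1 by auto; lia.
    + intros w Hw. simpl in Hw. destruct (w n) eqn:Ewn.
      * destruct (HT2 w Hw) as [l [Hl Hcy]]. exists (l ++ [true]). split.
        apply in_or_app; left. apply (in_map (fun l1 => l1 ++ _)); auto.
        apply cyl_app; auto. rewrite HT1 by auto. auto.
      * destruct (HF2 w Hw) as [l [Hl Hcy]]. exists (l ++ [false]). split.
        apply in_or_app; right. apply (in_map (fun l1 => l1 ++ _)); auto.
        apply cyl_app; auto. rewrite HF1 by auto. auto.
    + rewrite msum_app, !msum_map_app, HT3, HF3. simpl.
      rewrite (E_ext n (fun r => (indic P (true :: r) + indic P (false :: r)) / 2)
        (fun r => /2 * indic (fun r => P (true :: r)) r + /2 * indic (fun r => P (false :: r)) r))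
        by (intros; unfold indic; field).
      rewrite E_lin. field.
Qed.

Lemma step_bounds d nu k b e : 0 <= d <= 1 -> 0 <= e <= 1 -> 0 <= step d nu k b e <= 1.
Proof.
  intros Hd He. unfold step, Tplus_d, Tminus_d, Tplus, Tminus.
  assert (0 <= e ^ 2 <= e) by (simpl; nra).
  assert (0 <= (1 - e ^ 2) * d <= 1 - e ^ 2) by (simpl; nra).
  assert (0 <= 1 - 2 * e + e ^ 2) by (simpl; nra).
  assert (0 <= (1 - 2 * e + e ^ 2) * d <= 1 - 2 * e + e ^ 2) by (simpl; nra).
  destruct (Nat.leb k nu), b; split; lra.
Qed.

Lemma er_bounds d p nu r : 0 <= p <= 1 -> 0 <= d <= 1 -> 0 <= er d p nu r <= 1.
Proof.
  intros Hp Hd. induction r; simpl; auto. apply step_bounds; auto.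
Qed.

Lemma E_mean d p nu n : E n (fun r => 1 - er d p nu r) = (1 - p) * (1 - d) ^ (Nat.min n nu).
Proof.
  induction n.
  - simpl. ring.
  - simpl E.
    set (k := if Nat.leb (S n) nu then 1 - d else 1).
    rewrite (E_ext n _ (fun r => k * (1 - er d p nu r))).
    + rewrite E_scal, IHn. unfold k. destruct (Nat.leb (S n) nu) eqn:E1.
      * apply Nat.leb_le in E1. rewrite Nat.min_l by lia. rewrite Nat.min_l by lia. simpl. ring.
      * apply Nat.leb_gt in E1. rewrite Nat.min_r by lia. rewrite Nat.min_r by lia. ring.
    + intros r Hr. cbn [er]. rewrite Hr. unfold k, step.
      destruct (Nat.leb (S n) nu); unfold Tplus_d, Tminus_d, Tplus, Tminus; field.
Qed.

Definition fb (e : R) : R := sqrt (e * (1 - e)).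

Lemma f_nonneg e : 0 <= fb e.
Proof. apply sqrt_pos. Qed.

Lemma f_sq e : 0 <= e <= 1 -> fb e * fb e = e * (1 - e).
Proof. intros. unfold fb. apply sqrt_sqrt. nra. Qed.

Lemma f_le_half e : 0 <= e <= 1 -> fb e <= 1/2.
Proof.
  intros. unfold fb. rewrite <- (sqrt_pow2 (1/2)) by lra. apply sqrt_le_1_alt. simpl. pose proof (pow2_ge_0 (e - 1/2)). simpl in H0. nra.
Qed.

Lemma f_contract e : 0 <= e <= 1 -> (fb (Tplus e) + fb (Tminus e)) / 2 <= 9/10 * fb e.
Proof.
  intros He. unfold fb, Tplus, Tminus.
  set (a := sqrt e). set (b := sqrt (1 - e)). set (u := sqrt (1 + e)). set (v := sqrt (2 - e)).
  assert (Ha : a * a = e) by (apply sqrt_sqrt; lra).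
  assert (Hb : b * b = 1 - e) by (apply sqrt_sqrt; lra).
  assert (Hu : u * u = 1 + e) by (apply sqrt_sqrt; lra).
  assert (Hv : v * v = 2 - e) by (apply sqrt_sqrt; lra).
  assert (a0 : 0 <= a) by apply sqrt_pos. assert (b0 : 0 <= b) by apply sqrt_pos.
  assert (u0 : 0 <= u) by apply sqrt_pos. assert (v0 : 0 <= v) by apply sqrt_pos.
  replace (e ^ 2 * (1 - e ^ 2)) with ((a * a * b * u) ^ 2)
    by (transitivity ((a*a)*(a*a)*(b*b)*(u*u)); [ring| rewrite Ha, Hb, Hu; ring]).
  replace ((2 * e - e ^ 2) * (1 - (2 * e - e ^ 2))) with ((a * v * b * b) ^ 2)
    by (transitivity ((a*a)*(v*v)*(b*b)*(b*b)); [ring| rewrite Ha, Hb, Hv; ring]).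
  replace (e * (1 - e)) with ((a * b) ^ 2) by (transitivity ((a*a)*(b*b)); [ring| rewrite Ha, Hb; ring]).
  rewrite !sqrt_pow2 by (apply Rmult_le_pos; auto; repeat apply Rmult_le_pos; auto).
  assert (HS2 : (a * u + b * v) * (a * u + b * v) <= 3).
  { assert (Hid : (a * u + b * v) * (a * u + b * v) + (a * v - b * u) * (a * v - b * u)
            = (a * a + b * b) * (u * u + v * v)) by ring.
    rewrite Ha, Hb, Hu, Hv in Hid.
    assert (0 <= (a * v - b * u) * (a * v - b * u)) by apply Rle_0_sqr. nra. }
  assert (HS : a * u + b * v <= 9/5).
  { assert (0 <= a * u + b * v) by nra. nra. }
  assert (0 <= a * b) by nra. nra.
Qed.

Lemma E_f d p nu t : 0 <= p <= 1 -> 0 <= d <= 1 ->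
  E (nu + t) (fun r => fb (er d p nu r)) <= 1/2 * (9/10) ^ t.
Proof.
  intros Hp Hd. induction t.
  - rewrite Nat.add_0_r. apply Rle_trans with (E nu (fun _ => 1/2)).
    + apply E_mono. intros r _. apply f_le_half, er_bounds; auto.
    + rewrite E_const. simpl. lra.
  - rewrite Nat.add_succ_r. simpl E.
    apply Rle_trans with (E (nu + t) (fun r => 9/10 * fb (er d p nu r))).
    + apply E_mono. intros r Hr. cbn [er]. rewrite Hr. unfold step.
      replace (Nat.leb (S (nu + t)) nu) with false by (symmetry; apply Nat.leb_gt; lia).
      apply f_contract. apply er_bounds; auto.
    + rewrite E_scal. simpl pow. nra.
Qed.

Lemma ind_low x : 0 <= x <= 1 -> indic (fun _ => x < 1/2) [] <= (1 - x) + fb x.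
Proof.
  intros Hx. unfold indic. pose proof (f_nonneg x).
  destruct (excluded_middle_informative (x < 1/2)); [|lra].
  assert (x <= fb x).
  { unfold fb. rewrite <- (sqrt_pow2 x) at 1 by lra. apply sqrt_le_1_alt. simpl. nra. }
  lra.
Qed.

Lemma ind_high x : 0 <= x <= 1 -> indic (fun _ => 1/2 <= x) [] <= x + fb x.
Proof.
  intros Hx. unfold indic. pose proof (f_nonneg x).
  destruct (excluded_middle_informative (1/2 <= x)); [|lra].
  assert (1 - x <= fb x).
  { unfold fb. rewrite <- (sqrt_pow2 (1 - x)) at 1 by lra. apply sqrt_le_1_alt. simpl. nra. }
  lra.
Qed.

Lemma side_low x : 0 <= x <= 1 -> x * (1 - x) < 1/16 -> x < 1/2 ->
  Tplus x < 1/2 /\ Tminus x < 1/2.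
Proof.
  intros Hx H1 H2. assert (x < 1/8) by nra. unfold Tplus, Tminus. simpl. split; nra.
Qed.

Lemma side_high x : 0 <= x <= 1 -> x * (1 - x) < 1/16 -> 1/2 <= x ->
  1/2 <= Tplus x /\ 1/2 <= Tminus x.
Proof.
  intros Hx H1 H2. assert (7/8 < x) by nra. unfold Tplus, Tminus. simpl. split; nra.
Qed.

Lemma eps_step d p nu w m : (nu <= m)%nat ->
  eps_proc d p nu w (S m) = if w m then Tplus (eps_proc d p nu w m) else Tminus (eps_proc d p nu w m).
Proof.
  intros H. cbn [eps_proc].
  replace (Nat.leb (S m) nu) with false by (symmetry; apply Nat.leb_gt; lia). reflexivity.
Qed.

Definition q : R := 19/20.

Definition Bad d p nu (T : nat) (w : Omega) : Prop :=
  exists k, q ^ (T + k) <= fb (eps_proc d p nu w (nu + T + k)).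

Lemma q_pow_le1 n : q ^ n <= 1.
Proof. rewrite <- (pow1 n). apply pow_incr. unfold q; lra. Qed.

Lemma q_pow_pos n : 0 < q ^ n.
Proof. apply pow_lt. unfold q; lra. Qed.

Lemma conv_from_bound (u : nat -> R) (l : R) (N : nat) :
  (forall k, Rabs (u (N + k)%nat - l) <= q ^ k) -> Un_cv u l.
Proof.
  intros H eps Heps. destruct (pow_lt_1_zero q ltac:(unfold q; rewrite Rabs_right; lra) eps Heps) as [K HK].
  exists (N + K)%nat. intros n Hn. unfold R_dist.
  replace n with (N + (n - N))%nat by lia. eapply Rle_lt_trans. apply H.
  specialize (HK (n - N)%nat ltac:(lia)). rewrite Rabs_right in HK; auto.
  apply Rle_ge, Rlt_le, q_pow_pos.
Qed.

Lemma not_bad_conv d p nu T w : 0 <= p <= 1 -> 0 <= d <= 1 -> q ^ T <= 1/4 -> ~ Bad d p nu T w ->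
  (eps_proc d p nu w (nu + T) < 1/2 -> Un_cv (eps_proc d p nu w) 0) /\
  (1/2 <= eps_proc d p nu w (nu + T) -> Un_cv (eps_proc d p nu w) 1).
Proof.
  intros Hp Hd HqT HB.
  set (x := fun k => eps_proc d p nu w (nu + T + k)).
  assert (Hxb : forall k, 0 <= x k <= 1).
  { intro k. unfold x. rewrite eps_er. apply er_bounds; auto. }
  assert (Hf : forall k, fb (x k) < q ^ (T + k)).
  { intro k. apply Rnot_le_lt. intro H. apply HB. exists k. auto. }
  assert (Hf4 : forall k, fb (x k) <= q ^ k /\ fb (x k) < 1/4).
  { intro k. pose proof (Hf k). rewrite pow_add in H.
    pose proof (q_pow_le1 T). pose proof (q_pow_le1 k). pose proof (q_pow_pos k). pose proof (q_pow_pos T).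
    split; nra. }
  assert (Hsm : forall k, x k * (1 - x k) < 1/16).
  { intro k. rewrite <- f_sq by auto. destruct (Hf4 k). pose proof (f_nonneg (x k)). nra. }
  assert (Hnext : forall k, x (S k) = if w (nu + T + k)%nat then Tplus (x k) else Tminus (x k)).
  { intro k. unfold x. rewrite Nat.add_succ_r. apply eps_step. lia. }
  split.
  - intros H0.
    assert (Hlow : forall k, x k < 1/2).
    { induction k. unfold x. rewrite Nat.add_0_r. auto.
      rewrite Hnext. destruct (side_low (x k) (Hxb k) (Hsm k) IHk). destruct (w _); auto. }
    apply (conv_from_bound _ _ (nu + T)). intro k. fold (x k).
    rewrite Rminus_0_r. rewrite Rabs_right by (destruct (Hxb k); lra).
    pose proof (f_sq (x k) (Hxb k)). destruct (Hf4 k). pose proof (f_nonneg (x k)).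
    pose proof (Hlow k). destruct (Hxb k). nra.
  - intros H0.
    assert (Hhigh : forall k, 1/2 <= x k).
    { induction k. unfold x. rewrite Nat.add_0_r. auto.
      rewrite Hnext. destruct (side_high (x k) (Hxb k) (Hsm k) IHk). destruct (w _); auto. }
    apply (conv_from_bound _ _ (nu + T)). intro k. fold (x k).
    rewrite Rabs_left1 by (destruct (Hxb k); lra).
    pose proof (f_sq (x k) (Hxb k)). destruct (Hf4 k). pose proof (f_nonneg (x k)).
    pose proof (Hhigh k). destruct (Hxb k). nra.
Qed.

Lemma geo c a N : 0 <= c -> 0 <= a < 1 -> sum_f_R0 (fun n => c * a ^ n) N <= c / (1 - a).
Proof.
  intros Hc Ha.
  assert (H : sum_f_R0 (fun n => c * a ^ n) N + c * a ^ (S N) / (1 - a) = c / (1 - a)).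
  { induction N.
    - simpl. field. lra.
    - cbn [sum_f_R0]. rewrite <- IHN. cbn [pow]. field. lra. }
  assert (0 <= c * a ^ (S N) / (1 - a)).
  { apply Rmult_le_pos. apply Rmult_le_pos; auto. apply pow_le; lra.
    apply Rlt_le, Rinv_0_lt_compat; lra. }
  lra.
Qed.

Lemma outer_le_mono A r r' : outer_le A r -> r <= r' -> outer_le A r'.
Proof.
  intros [c [H1 H2]] Hr. exists c. split; auto. intro N. specialize (H2 N). lra.
Qed.

Lemma level_mass d p nu T k : 0 <= p <= 1 -> 0 <= d <= 1 ->
  E (nu + T + k) (indic (fun r => q ^ (T + k) <= fb (er d p nu r))) <= 1/2 * (18/19) ^ (T + k).
Proof.
  intros Hp Hd.
  pose proof (markov (nu + T + k) (fun r => fb (er d p nu r)) (q ^ (T + k)) (q_pow_pos _)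
    (fun r => f_nonneg _)) as Hm.
  pose proof (E_f d p nu (T + k) Hp Hd) as Hf. rewrite Nat.add_assoc in Hf.
  replace (9/10) with (18/19 * q) in Hf by (unfold q; field).
  rewrite Rpow_mult_distr in Hf.
  apply (Rmult_le_reg_l (q ^ (T + k))). apply q_pow_pos. nra.
Qed.

Lemma bad_cover d p nu T (extra : list (list bool)) (B : Omega -> Prop) t' :
  0 <= p <= 1 -> 0 <= d <= 1 ->
  (forall w, B w -> (exists l, In l extra /\ cylinder l w) \/ Bad d p nu T w) ->
  outer_le B (msum extra + 19 * (18/19) ^ T + 2 * (/2) ^ t').
Proof.
  intros Hp Hd HB.
  set (Pk := fun k => fun r => q ^ (T + k) <= fb (er d p nu r)).
  set (LB := fun k => proj1_sig (constructive_indefinite_description _ (level_cover (nu + T + k) (Pk k)))).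
  assert (HLB : forall k, (forall w, Pk k (rp w (nu + T + k)) -> exists l, In l (LB k) /\ cylinder l w) /\
                          msum (LB k) = E (nu + T + k) (indic (Pk k))).
  { intro k. unfold LB. destruct (constructive_indefinite_description _ _) as [L HL]. simpl. destruct HL as [_ HL]. exact HL. }
  set (dummy := fun n => repeat false (n + t')).
  set (Ls := fun n => match n with O => extra ++ [dummy O] | S k => LB k ++ [dummy (S k)] end).
  assert (Hdm : forall n, cyl_mass (dummy n) = (/2) ^ t' * (/2) ^ n).
  { intro n. unfold cyl_mass, dummy. rewrite repeat_length, <- pow_add, Nat.add_comm. reflexivity. }
  apply union_cover with Ls.
  - intros n H. destruct n; simpl in H; apply app_eq_nil in H; destruct H; discriminate.
  - intros w Hw. destruct (HB w Hw) as [[l [Hl Hc]]|[k Hk]].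
    + exists 0%nat, l. split; auto. simpl. apply in_or_app; auto.
    + destruct (proj1 (HLB k) w) as [l [Hl Hc]].
      { unfold Pk. rewrite <- eps_er. auto. }
      exists (S k), l. split; auto. simpl. apply in_or_app; auto.
  - intro N.
    assert (Hs : sum_f_R0 (fun n => msum (Ls n)) N <=
                 msum extra + sum_f_R0 (fun n => (18/19) ^ T * (18/19) ^ n + (/2) ^ t' * (/2) ^ n) N).
    { induction N.
      - simpl. rewrite msum_app. simpl. rewrite Hdm.
        pose proof (pow_le (18/19) T ltac:(lra)). simpl. lra.
      - cbn [sum_f_R0]. simpl Ls. rewrite msum_app. simpl msum. rewrite Hdm.
        rewrite (proj2 (HLB N)). unfold Pk. pose proof (level_mass d p nu T N Hp Hd).
        replace ((18/19)^(T+N)) with ((18/19)^T * (18/19)^N) in H by (rewrite pow_add; ring). cbn [pow].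
        pose proof (pow_le (18/19) T ltac:(lra)). pose proof (pow_le (18/19) N ltac:(lra)).
        nra. }
    rewrite sum_plus in Hs.
    pose proof (geo ((18/19) ^ T) (18/19) N (pow_le (18/19) T ltac:(lra)) ltac:(lra)).
    pose proof (geo ((/2) ^ t') (/2) N (pow_le (/2) t' ltac:(lra)) ltac:(lra)).
    replace ((18/19) ^ T / (1 - 18/19)) with (19 * (18/19) ^ T) in H by field.
    replace ((/2) ^ t' / (1 - /2)) with (2 * (/2) ^ t') in H0 by field.
    lra.
Qed.

Lemma omi A B v : (forall w, A w \/ B w) -> (forall e, 0 < e -> outer_le A (v + e)) ->
  (forall e, 0 < e -> outer_le B (1 - v + e)) -> outer_measure_is A v.
Proof.
  intros HAB H1 H2. split.
  - intros r Hr. apply outer_le_mono with (v + (r - v)); [apply H1; lra | lra].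
  - intros r Hr. apply Rnot_lt_le; intro Hlt.
    pose proof (two_cover_mass A B _ _ HAB Hr (H2 ((v - r) / 2) ltac:(lra))). lra.
Qed.

Lemma choose_T eta : 0 < eta -> exists T, q ^ T <= 1/4 /\ q ^ T <= eta.
Proof.
  intros He. destruct (pow_lt_1_zero q ltac:(unfold q; rewrite Rabs_right; lra) (Rmin (1/4) eta)
    ltac:(apply Rmin_glb_lt; lra)) as [T HT].
  exists T. specialize (HT T (le_n _)). rewrite Rabs_right in HT by (apply Rle_ge, pow_le; unfold q; lra).
  pose proof (Rmin_l (1/4) eta). pose proof (Rmin_r (1/4) eta). lra.
Qed.

Lemma choose_t eta : 0 < eta -> exists t, (/2) ^ t <= eta.
Proof.
  intros He. destruct (pow_lt_1_zero (/2) ltac:(rewrite Rabs_right; lra) eta He) as [T HT].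
  exists T. specialize (HT T (le_n _)). rewrite Rabs_right in HT by (apply Rle_ge, pow_le; lra). lra.
Qed.

Lemma pow_cmp T : (18/19) ^ T <= q ^ T /\ (9/10) ^ T <= q ^ T.
Proof. split; apply pow_incr; unfold q; lra. Qed.

Theorem proposition6 (p d : R) (nu : nat)
  (hp : 0 <= p <= 1) (hd : 0 <= d <= 1) (hnu : (1 <= nu)%nat) :
  exists eps_inf : Omega -> R,
    (forall w, eps_inf w = 0 \/ eps_inf w = 1) /\
    null_set (fun w => ~ Un_cv (eps_proc d p nu w) (eps_inf w)) /\
    outer_measure_is (fun w => eps_inf w = 0) (1 - p - DeltaR d p nu) /\
    outer_measure_is (fun w => eps_inf w <> 0) (p + DeltaR d p nu).
Proof.
  set (a := (1 - p) * (1 - d) ^ nu).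
  assert (Ha1 : 1 - p - DeltaR d p nu = a) by (unfold DeltaR, a; ring).
  assert (Ha2 : p + DeltaR d p nu = 1 - a) by (unfold DeltaR, a; ring).
  set (ei := fun w => if excluded_middle_informative (Un_cv (eps_proc d p nu w) 0) then 0 else 1).
  assert (Hmean : E (nu + 0 + 0) (fun r => 0) = 0) by apply E_const.
  assert (Setup : forall e, 0 < e -> exists T t', q ^ T <= 1/4 /\
            1/2 * (9/10) ^ T + 19 * (18/19) ^ T + 2 * (/2) ^ t' < e).
  { intros e He. destruct (choose_T (e / 100) ltac:(lra)) as [T [HT1 HT2]].
    destruct (choose_t (e / 100) ltac:(lra)) as [t Ht].
    exists T, t. destruct (pow_cmp T). split; auto. lra. }
  assert (Hm : forall T, E (nu + T) (fun r => 1 - er d p nu r) = a).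
  { intro T. rewrite E_mean, Nat.min_r by lia. reflexivity. }
  assert (U1 : forall e, 0 < e -> outer_le (fun w => ei w = 0) (a + e)).
  { intros e He. destruct (Setup e He) as [T [t' [HqT Hb]]].
    destruct (level_cover (nu + T) (fun r => er d p nu r < 1/2)) as [L0 [_ [HL0c HL0m]]].
    assert (HL0 : msum L0 <= a + 1/2 * (9/10) ^ T).
    { rewrite HL0m. apply Rle_trans with (E (nu + T) (fun r => (1 - er d p nu r) + fb (er d p nu r))).
      - apply E_mono. intros r _. exact (ind_low (er d p nu r) (er_bounds d p nu r hp hd)).
      - rewrite E_add, Hm. pose proof (E_f d p nu T hp hd). lra. }
    apply outer_le_mono with (msum L0 + 19 * (18/19) ^ T + 2 * (/2) ^ t'); [|lra].
    apply (bad_cover d p nu T); auto.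
    intros w Hw. destruct (classic (Bad d p nu T w)) as [HB|HB]; [right; auto|left].
    destruct (not_bad_conv d p nu T w hp hd HqT HB) as [Hlo Hhi].
    destruct (Rlt_or_le (eps_proc d p nu w (nu + T)) (1/2)) as [Hx|Hx].
    - apply HL0c. rewrite <- eps_er. auto.
    - exfalso. specialize (Hhi Hx). unfold ei in Hw.
      destruct (excluded_middle_informative _) as [Hc|Hc].
      + pose proof (UL_sequence _ _ _ Hc Hhi). lra.
      + lra. }
  assert (U2 : forall e, 0 < e -> outer_le (fun w => ei w <> 0) (1 - a + e)).
  { intros e He. destruct (Setup e He) as [T [t' [HqT Hb]]].
    destruct (level_cover (nu + T) (fun r => 1/2 <= er d p nu r)) as [L0 [_ [HL0c HL0m]]].
    assert (HL0 : msum L0 <= 1 - a + 1/2 * (9/10) ^ T).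
    { rewrite HL0m. apply Rle_trans with (E (nu + T) (fun r => er d p nu r + fb (er d p nu r))).
      - apply E_mono. intros r _. exact (ind_high (er d p nu r) (er_bounds d p nu r hp hd)).
      - rewrite E_add.
        rewrite (E_ext _ (fun r => er d p nu r) (fun r => 1 * 1 + (-1) * (1 - er d p nu r)))
          by (intros; ring).
        rewrite E_lin, E_const, Hm. pose proof (E_f d p nu T hp hd). lra. }
    apply outer_le_mono with (msum L0 + 19 * (18/19) ^ T + 2 * (/2) ^ t'); [|lra].
    apply (bad_cover d p nu T); auto.
    intros w Hw. destruct (classic (Bad d p nu T w)) as [HB|HB]; [right; auto|left].
    destruct (not_bad_conv d p nu T w hp hd HqT HB) as [Hlo Hhi].
    destruct (Rlt_or_le (eps_proc d p nu w (nu + T)) (1/2)) as [Hx|Hx].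
    - exfalso. specialize (Hlo Hx). unfold ei in Hw.
      destruct (excluded_middle_informative _) as [Hc|Hc]; [lra | tauto].
    - apply HL0c. rewrite <- eps_er. auto. }
  exists ei. split; [|split; [|split]].
  - intro w. unfold ei. destruct (excluded_middle_informative _); auto.
  - intros e He. destruct (Setup e He) as [T [t' [HqT Hb]]].
    apply outer_le_mono with (msum [] + 19 * (18/19) ^ T + 2 * (/2) ^ t').
    + apply (bad_cover d p nu T); auto.
      intros w Hw. destruct (classic (Bad d p nu T w)) as [HB|HB]; [right; auto|exfalso].
      destruct (not_bad_conv d p nu T w hp hd HqT HB) as [Hlo Hhi].
      apply Hw. unfold ei.
      destruct (Rlt_or_le (eps_proc d p nu w (nu + T)) (1/2)) as [Hx|Hx].
      * specialize (Hlo Hx). destruct (excluded_middle_informative _) as [Hc|Hc]; tauto.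
      * specialize (Hhi Hx). destruct (excluded_middle_informative _) as [Hc|Hc]; auto.
    + simpl msum. pose proof (pow_le (9/10) T ltac:(lra)). lra.
  - rewrite Ha1. apply omi with (fun w => ei w <> 0).
    + intro w. destruct (Req_dec (ei w) 0); auto.
    + exact U1.
    + intros e He. replace (1 - a + e) with (1 - a + e) by ring. apply U2; auto.
  - rewrite Ha2. apply omi with (fun w => ei w = 0).
    + intro w. destruct (Req_dec (ei w) 0); auto.
    + exact U2.
    + intros e He. replace (1 - (1 - a) + e) with (a + e) by ring. apply U1; auto.
Qed.
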